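(* Let $P,Q,R\in D$ be non-collinear and let $m\in\mathbb{Z}_{\ge0}$ be the number of triangles inscribed in $S^1$ and circumscribing $\triangle PQR$. Then $$m=\begin{cases}0 & \text{if } \omega(P,Q,R)<1,\\ 1 & \text{if } \omega(P,Q,R)=1,\\ 2 & \text{if } \omega(P,Q,R)>1.\end{cases}$$
   Context: $D=\{(x,y)\in\mathbb{R}^2: x^2+y^2<1\}$ (Beltrami–Klein disk), $S^1$ its boundary circle. Let $D_P$ be the unit disk with Poincaré distance $d(P,Q)=\operatorname{arccosh}\left(1+\frac{2|P-Q|^2}{(1-|P|^2)(1-|Q|^2)}\right)$, and $G^{-1}:D\to D_P$, $G^{-1}(x,y)=\left(\frac{x}{1+\sqrt{1-x^2-y^2}},\frac{y}{1+\sqrt{1-x^2-y^2}}\right)$. For $P,Q\in D$, $d'(P,Q):=d(G^{-1}(P),G^{-1}(Q))$. For $P\ne Q$, $\Delta'(P,Q):=\log\frac{e^{d'(P,Q)}+1}{e^{d'(P,Q)}-1}$. $\delta(P,Q,R)$ is the minimum of $d'(R,S)$ over points $S\in D$ on the straight line through $P$ and $Q$. Define $$\omega(P,Q,R):=\frac{\delta(P,Q,R)+\delta(R,P,Q)+\delta(Q,R,P)}{\Delta'(P,Q)+\Delta'(R,P)+\Delta'(Q,R)}.$$ A triangle inscribed in $S^1$ and circumscribing $\triangle PQR$ is a Euclidean triangle with three distinct vertices on $S^1$ such that $P$, $Q$, $R$ lie on three distinct sides of it (one point on each side). *)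

(* Defs.v *)
From Stdlib Require Import Reals Lra List ClassicalEpsilon.
Open Scope R_scope.

Definition pt := (R * R)%type.

Definition InD (P : pt) : Prop := fst P ^ 2 + snd P ^ 2 < 1.
Definition OnS1 (P : pt) : Prop := fst P ^ 2 + snd P ^ 2 = 1.

Definition sqdist (P Q : pt) : R := (fst P - fst Q) ^ 2 + (snd P - snd Q) ^ 2.
Definition sqnorm (P : pt) : R := fst P ^ 2 + snd P ^ 2.

Definition arccosh (x : R) : R := ln (x + sqrt (x ^ 2 - 1)).

Definition dP (P Q : pt) : R :=
  arccosh (1 + 2 * sqdist P Q / ((1 - sqnorm P) * (1 - sqnorm Q))).

(* G^{-1} : Klein disk -> Poincare disk *)
Definition Ginv (P : pt) : pt :=
  let s := 1 + sqrt (1 - fst P ^ 2 - snd P ^ 2) in (fst P / s, snd P / s).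

Definition d' (P Q : pt) : R := dP (Ginv P) (Ginv Q).

Definition Delta' (P Q : pt) : R :=
  ln ((exp (d' P Q) + 1) / (exp (d' P Q) - 1)).

Definition on_line (P Q S : pt) : Prop :=
  exists t : R, S = (fst P + t * (fst Q - fst P), snd P + t * (snd Q - snd P)).

Definition is_delta (P Q Rp : pt) (m : R) : Prop :=
  (exists S, InD S /\ on_line P Q S /\ d' Rp S = m) /\
  (forall S, InD S -> on_line P Q S -> m <= d' Rp S).

Definition delta (P Q Rp : pt) : R :=
  epsilon (inhabits 0) (is_delta P Q Rp).

Definition omega (P Q Rp : pt) : R :=
  (delta P Q Rp + delta Rp P Q + delta Q Rp P) /
  (Delta' P Q + Delta' Rp P + Delta' Q Rp).

Definition collinear (P Q Rp : pt) : Prop :=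
  (fst Q - fst P) * (snd Rp - snd P) - (snd Q - snd P) * (fst Rp - fst P) = 0.

Definition on_segment (X A B : pt) : Prop :=
  exists t : R, 0 <= t <= 1 /\
    X = (fst A + t * (fst B - fst A), snd A + t * (snd B - snd A)).

(* A triangle is represented by its set of three vertices. *)
Definition circumscribing_inscribed (P Q Rp : pt) (T : pt -> Prop) : Prop :=
  exists A B C : pt,
    OnS1 A /\ OnS1 B /\ OnS1 C /\ A <> B /\ B <> C /\ C <> A /\
    T = (fun X => X = A \/ X = B \/ X = C) /\
    on_segment P B C /\ on_segment Q C A /\ on_segment Rp A B.

Definition has_card {T : Type} (S : T -> Prop) (n : nat) : Prop :=
  exists l : list T, length l = n /\ NoDup l /\ (forall x, In x l <-> S x).

(* Main.v *)
Require Import Defs.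
From Stdlib Require Import Reals.
From Stdlib Require Import Lra Nsatz Psatz List ClassicalEpsilon.
Open Scope R_scope.


Definition dot (X Y:pt) := fst X * fst Y + snd X * snd Y.

Definition chordrel (A B X : pt) : Prop :=
  fst B * (1 - (fst X*fst A + snd X*snd A)) - snd B * (snd X*fst A - fst X*snd A) = fst X - fst A /\
  fst B * (snd X*fst A - fst X*snd A) + snd B * (1 - (fst X*fst A + snd X*snd A)) = snd X - snd A.

Definition Bof (X A : pt) : pt :=
  let w1 := 1 - (fst X*fst A + snd X*snd A) in
  let w2 := snd X*fst A - fst X*snd A in
  let z1 := fst X - fst A in let z2 := snd X - snd A in
  let n := w1^2 + w2^2 in ((z1*w1 + z2*w2)/n, (z2*w1 - z1*w2)/n).

Lemma W1_pos (X A : pt) : InD X -> OnS1 A -> 0 < 1 - (fst X*fst A + snd X*snd A).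
Proof.
  destruct X as [x1 x2], A as [a1 a2]; unfold InD, OnS1; simpl; intros.
  pose proof (pow2_ge_0 (x1-a1)). pose proof (pow2_ge_0 (x2-a2)). nra.
Qed.

Lemma Bof_rel X A : InD X -> OnS1 A -> chordrel A (Bof X A) X.
Proof.
  intros HX HA. pose proof (W1_pos X A HX HA) as Hw.
  destruct X as [x1 x2], A as [a1 a2]; unfold chordrel, Bof; simpl in *.
  set (w1 := 1 - (x1*a1 + x2*a2)) in *. set (w2 := x2*a1 - x1*a2).
  assert (Hn : w1^2 + w2^2 <> 0) by nra.
  assert (Hn' : w1*w1 + w2*w2 <> 0) by nra.
  split; field; auto.
Qed.

Lemma sum_sq_pos u v : (u <> 0 \/ v <> 0) -> 0 < u^2+v^2.
Proof.
  intros [H|H].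
  - pose proof (Rsqr_pos_lt u H). pose proof (pow2_ge_0 v). unfold Rsqr in *. simpl. lra.
  - pose proof (Rsqr_pos_lt v H). pose proof (pow2_ge_0 u). unfold Rsqr in *. simpl. lra.
Qed.

Lemma sq_ne u v : 0 < u -> u^2 + v^2 <> 0.
Proof. intros. pose proof (pow2_ge_0 v). nra. Qed.

Lemma sq_ne' u v : 0 < u -> u*u + v*v <> 0.
Proof. intros. pose proof (pow2_ge_0 v). nra. Qed.

Lemma div_circ u v n : n <> 0 -> u^2 + v^2 = n*n -> (u/n)^2 + (v/n)^2 = 1.
Proof. intros Hn H. field_simplify; auto. rewrite H. field. auto. Qed.

Lemma Bof_S1 X A : InD X -> OnS1 A -> OnS1 (Bof X A).
Proof.
  intros HX HA. pose proof (W1_pos X A HX HA) as Hw.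
  destruct X as [x1 x2], A as [a1 a2]; unfold OnS1, Bof in *; simpl in *.
  apply div_circ. apply sq_ne; auto.
  clear -HA. simpl. nsatz.
Qed.

Lemma rel_unique X A B : InD X -> OnS1 A -> chordrel A B X -> B = Bof X A.
Proof.
  intros HX HA [H1 H2]. pose proof (W1_pos X A HX HA) as Hw.
  destruct X as [x1 x2], A as [a1 a2], B as [b1 b2]; unfold Bof in *; simpl in *.
  pose proof (sq_ne _ (x2*a1 - x1*a2) Hw) as Hn.
  pose proof (sq_ne' _ (x2*a1 - x1*a2) Hw) as Hn'.
  rewrite <- H1, <- H2. f_equal; field; auto.
Qed.

Lemma chord_fwd A B X : OnS1 A -> OnS1 B -> on_segment X A B -> chordrel A B X.
Proof.
  intros HA HB [t [Ht HX]]. subst X.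
  destruct A as [a1 a2], B as [b1 b2]; unfold OnS1, chordrel in *; simpl in *.
  clear Ht. split; simpl; nsatz.
Qed.

Lemma chord_bwd A B X : OnS1 A -> OnS1 B -> InD X -> chordrel A B X ->
  A <> B /\ on_segment X A B.
Proof.
  intros HA HB HX [H1 H2].
  pose proof (W1_pos X A HX HA) as Hw.
  destruct X as [x1 x2], A as [a1 a2], B as [b1 b2]; unfold OnS1, InD, on_segment in *; simpl in *.
  assert (Hne : (a1, a2) <> (b1, b2)).
  { intro E. injection E as E1 E2. subst b1 b2.
    assert (x1*a1 + x2*a2 = 1) by (clear -H1 H2 HA; simpl; nsatz). lra. }
  split; auto.
  assert (Hd : 0 < (b1-a1)^2 + (b2-a2)^2).
  { apply sum_sq_pos. destruct (Req_dec b1 a1); [destruct (Req_dec b2 a2)|].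
    - subst. contradiction.
    - right; lra.
    - left; lra. }
  assert (Hc : (x1-a1)*(b2-a2) - (x2-a2)*(b1-a1) = 0) by (clear -H1 H2 HA HB; simpl; nsatz).
  set (d := (b1-a1)^2 + (b2-a2)^2) in *.
  set (t := ((x1-a1)*(b1-a1) + (x2-a2)*(b2-a2)) / d).
  assert (K1 : (x1-a1)*d = ((x1-a1)*(b1-a1) + (x2-a2)*(b2-a2))*(b1-a1))
    by (unfold d; clear -Hc; simpl; nsatz).
  assert (K2 : (x2-a2)*d = ((x1-a1)*(b1-a1) + (x2-a2)*(b2-a2))*(b2-a2))
    by (unfold d; clear -Hc; simpl; nsatz).
  assert (E1 : x1 = a1 + t*(b1-a1)).
  { unfold t. replace (((x1-a1)*(b1-a1) + (x2-a2)*(b2-a2))/d*(b1-a1))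
      with (((x1-a1)*(b1-a1) + (x2-a2)*(b2-a2))*(b1-a1)/d) by (field; lra).
    rewrite <- K1. field. lra. }
  assert (E2 : x2 = a2 + t*(b2-a2)).
  { unfold t. replace (((x1-a1)*(b1-a1) + (x2-a2)*(b2-a2))/d*(b2-a2))
      with (((x1-a1)*(b1-a1) + (x2-a2)*(b2-a2))*(b2-a2)/d) by (field; lra).
    rewrite <- K2. field. lra. }
  clearbody t. subst x1 x2.
  assert (HN : (a1 + t*(b1-a1))^2 + (a2 + t*(b2-a2))^2 = 1 + t*(t-1)*d)
    by (unfold d; clear -HA HB; simpl; nsatz).
  assert (t*(t-1) < 0).
  { destruct (Rlt_dec (t*(t-1)) 0); auto. exfalso. nra. }
  exists t. split; [split|]; try nra. reflexivity.
Qed.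

Definition mv (P Q Rp : pt) : pt :=
  (fst Rp + fst Q - fst P - ((fst Q*fst P + snd Q*snd P)*fst Rp - (snd Q*fst P - fst Q*snd P)*snd Rp),
   snd Rp + snd Q - snd P - ((fst Q*fst P + snd Q*snd P)*snd Rp + (snd Q*fst P - fst Q*snd P)*fst Rp)).
Definition yv (P Q Rp : pt) : R := 1 - dot Q P + dot Q Rp - dot P Rp.

Lemma chain_core : forall p1 p2 q1 q2 r1 r2 a1 a2 b1 b2 c1 c2 : R,
 b1*(1 - (r1*a1 + r2*a2)) - b2*(r2*a1 - r1*a2) = r1 - a1 ->
 b1*(r2*a1 - r1*a2) + b2*(1 - (r1*a1 + r2*a2)) = r2 - a2 ->
 c1*(1 - (p1*b1 + p2*b2)) - c2*(p2*b1 - p1*b2) = p1 - b1 ->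
 c1*(p2*b1 - p1*b2) + c2*(1 - (p1*b1 + p2*b2)) = p2 - b2 ->
 a1*(1 - (q1*c1 + q2*c2)) - a2*(q2*c1 - q1*c2) = q1 - c1 ->
 a1*(q2*c1 - q1*c2) + a2*(1 - (q1*c1 + q2*c2)) = q2 - c2 ->
 a1*a1+a2*a2 = 1 ->
 (r1+q1-p1 - ((q1*p1+q2*p2)*r1 - (q2*p1 - q1*p2)*r2))*a1 +
 (r2+q2-p2 - ((q1*p1+q2*p2)*r2 + (q2*p1 - q1*p2)*r1))*a2 =
 1 - (q1*p1+q2*p2) + (q1*r1+q2*r2) - (p1*r1+p2*r2).
Proof. intros. nsatz. Qed.

Lemma chain_fwd P Q Rp A B C : OnS1 A -> chordrel A B Rp -> chordrel B C P ->
  chordrel C A Q -> dot (mv P Q Rp) A = yv P Q Rp.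
Proof.
  intros HA [H1 H2] [H3 H4] [H5 H6].
  destruct P as [p1 p2], Q as [q1 q2], Rp as [r1 r2], A as [a1 a2], B as [b1 b2], C as [c1 c2].
  unfold OnS1, mv, yv, dot in *; simpl in *.
  assert (HA' : a1*a1+a2*a2 = 1) by (rewrite <- HA; ring).
  pose proof (chain_core p1 p2 q1 q2 r1 r2 a1 a2 b1 b2 c1 c2 H1 H2 H3 H4 H5 H6 HA') as K.
  lra.
Qed.

Definition cm (z w : pt) : pt := (fst z*fst w - snd z*snd w, fst z*snd w + snd z*fst w).
Definition cs (z w : pt) : pt := (fst z - fst w, snd z - snd w).
Definition cj (z : pt) : pt := (fst z, - snd z).
Definition Wf (X A : pt) : pt := (1 - (fst X*fst A + snd X*snd A), snd X*fst A - fst X*snd A).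

Lemma chordrel_cm A B X : chordrel A B X <-> cm B (Wf X A) = cs X A.
Proof.
  destruct A, B, X; unfold chordrel, cm, Wf, cs; simpl. split.
  - intros [H1 H2]; rewrite H1, H2; auto.
  - intros H; injection H; auto.
Qed.

Lemma cm_zero v g : cm v g = (0,0) -> 0 < fst v * fst v + snd v * snd v -> g = (0,0).
Proof.
  destruct v as [v1 v2], g as [g1 g2]; unfold cm; simpl. intros H Hv.
  injection H as E1 E2.
  assert (F1 : (v1*v1+v2*v2)*g1 = 0) by (clear -E1 E2; nsatz).
  assert (F2 : (v1*v1+v2*v2)*g2 = 0) by (clear -E1 E2; nsatz).
  apply Rmult_integral in F1; apply Rmult_integral in F2.
  f_equal; lra.
Qed.

Lemma Wf_pos X A : InD X -> OnS1 A -> 0 < fst (Wf X A) * fst (Wf X A) + snd (Wf X A) * snd (Wf X A).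
Proof.
  intros. pose proof (W1_pos X A H H0). unfold Wf; simpl.
  pose proof (Rmult_lt_0_compat _ _ H1 H1). pose proof (Rle_0_sqr (snd X * fst A - fst X * snd A)).
  unfold Rsqr in *. lra.
Qed.

Lemma cm_pos v w : 0 < fst v * fst v + snd v * snd v -> 0 < fst w * fst w + snd w * snd w ->
  0 < fst (cm v w) * fst (cm v w) + snd (cm v w) * snd (cm v w).
Proof.
  destruct v as [v1 v2], w as [w1 w2]; unfold cm; simpl; intros.
  replace ((v1 * w1 - v2 * w2) * (v1 * w1 - v2 * w2) + (v1 * w2 + v2 * w1) * (v1 * w2 + v2 * w1))
    with ((v1*v1+v2*v2)*(w1*w1+w2*w2)) by ring.
  apply Rmult_lt_0_compat; auto.
Qed.

Ltac pteq := match goal with |- (_,_) = (_,_) => f_equal end.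

Lemma E_core : forall p1 p2 q1 q2 r1 r2 a1 a2 : R,
 a1*a1+a2*a2 = 1 ->
 (r1+q1-p1 - ((q1*p1+q2*p2)*r1 - (q2*p1 - q1*p2)*r2))*a1 +
 (r2+q2-p2 - ((q1*p1+q2*p2)*r2 + (q2*p1 - q1*p2)*r1))*a2 =
 1 - (q1*p1+q2*p2) + (q1*r1+q2*r2) - (p1*r1+p2*r2) ->
 let u1 := 1 - (r1*a1 + r2*a2) in let u2 := r2*a1 - r1*a2 in
 let v1 := u1 - (p1*(r1-a1) + p2*(r2-a2)) in
 let v2 := u2 - (p1*(r2-a2) - p2*(r1-a1)) in
 let w1 := p1*u1 - p2*u2 - (r1-a1) in
 let w2 := p1*u2 + p2*u1 - (r2-a2) in
 let av1 := a1*v1 - a2*v2 in let av2 := a1*v2 + a2*v1 in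
 let aq1 := a1*q1 + a2*q2 in let aq2 := a2*q1 - a1*q2 in
 let aqw1 := aq1*w1 - aq2*w2 in let aqw2 := aq1*w2 + aq2*w1 in
 let qv1 := q1*v1 - q2*v2 in let qv2 := q1*v2 + q2*v1 in
 av1 - aqw1 - qv1 + w1 = 0 /\ av2 - aqw2 - qv2 + w2 = 0.
Proof. intros. subst u1 u2 v1 v2 w1 w2 av1 av2 aq1 aq2 aqw1 aqw2 qv1 qv2. split; nsatz. Qed.

Lemma chain_bwd P Q Rp A B C : InD P -> InD Rp -> OnS1 A -> OnS1 B ->
  chordrel A B Rp -> chordrel B C P -> dot (mv P Q Rp) A = yv P Q Rp ->
  chordrel C A Q.
Proof.
  intros HP HR HA HB H12 H34 Hl.
  pose proof (cm_pos _ _ (Wf_pos _ _ HR HA) (Wf_pos _ _ HP HB)) as Hv.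
  apply chordrel_cm in H12, H34. apply chordrel_cm.
  set (v := cm (Wf Rp A) (Wf P B)) in *.
  assert (Hvz : cm v (cs (cm A (Wf Q C)) (cs Q C)) = (0,0)).
  { unfold v. clear Hv v.
    destruct P as [p1 p2], Q as [q1 q2], Rp as [r1 r2], A as [a1 a2], B as [b1 b2], C as [c1 c2].
    unfold OnS1, dot, mv, yv, cm, cs, Wf in *; simpl in *.
    injection H12 as E1 E2. injection H34 as E3 E4.
    assert (Ea : ((1 - (r1 * a1 + r2 * a2)) * (1 - (p1 * b1 + p2 * b2)) -
      (r2 * a1 - r1 * a2) * (p2 * b1 - p1 * b2)) = (1 - (r1 * a1 + r2 * a2)) - (p1*(r1-a1) + p2*(r2-a2)))
      by (clear -E1 E2; nsatz).
    assert (Eb : ((1 - (r1 * a1 + r2 * a2)) * (p2 * b1 - p1 * b2) +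
      (r2 * a1 - r1 * a2) * (1 - (p1 * b1 + p2 * b2))) = (r2 * a1 - r1 * a2) - (p1*(r2-a2) - p2*(r1-a1)))
      by (clear -E1 E2; nsatz).
    rewrite Ea, Eb.
    set (u1 := 1 - (r1*a1 + r2*a2)). set (u2 := r2*a1 - r1*a2).
    set (v1 := u1 - (p1*(r1-a1) + p2*(r2-a2))).
    set (v2 := u2 - (p1*(r2-a2) - p2*(r1-a1))).
    set (w1 := p1*u1 - p2*u2 - (r1-a1)).
    set (w2 := p1*u2 + p2*u1 - (r2-a2)).
    assert (KC1 : c1*v1 - c2*v2 = w1).
    { unfold v1, v2, w1, w2, u1, u2. clear -E1 E2 E3 E4. simpl. nsatz. }
    assert (KC2 : c1*v2 + c2*v1 = w2).
    { unfold v1, v2, w1, w2, u1, u2. clear -E1 E2 E3 E4. simpl. nsatz. }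
    assert (KE : (a1*v1 - a2*v2) - ((a1*q1 + a2*q2)*w1 - (a2*q1 - a1*q2)*w2) - (q1*v1 - q2*v2) + w1 = 0
              /\ (a1*v2 + a2*v1) - ((a1*q1 + a2*q2)*w2 + (a2*q1 - a1*q2)*w1) - (q1*v2 + q2*v1) + w2 = 0).
    { assert (HA' : a1*a1+a2*a2 = 1) by (rewrite <- HA; ring).
      pose proof (E_core p1 p2 q1 q2 r1 r2 a1 a2 HA' Hl) as K. simpl in K.
      unfold v1, v2, w1, w2, u1, u2. destruct K as [K1 K2]. split; lra. }
    destruct KE as [KE1 KE2].
    clearbody u1 u2 v1 v2 w1 w2.
    pteq.
    - clear -KC1 KC2 KE1 KE2. nsatz.
    - clear -KC1 KC2 KE1 KE2. nsatz. }
  pose proof (cm_zero _ _ Hvz Hv) as HG.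
  destruct Q, C, A; unfold cm, cs, Wf in *; simpl in *. injection HG as G1 G2.
  pteq; lra.
Qed.


Definition Tri (P Rp A : pt) : pt -> Prop :=
  fun X => X = A \/ X = Bof Rp A \/ X = Bof P (Bof Rp A).

Lemma char_fwd P Q Rp T : InD P -> InD Q -> InD Rp -> circumscribing_inscribed P Q Rp T ->
  exists A, OnS1 A /\ dot (mv P Q Rp) A = yv P Q Rp /\ T = Tri P Rp A.
Proof.
  intros HP HQ HR (A & B & C & HA & HB & HC & _ & _ & _ & HT & S1 & S2 & S3).
  pose proof (chord_fwd _ _ _ HA HB S3) as K1.
  pose proof (chord_fwd _ _ _ HB HC S1) as K2.
  pose proof (chord_fwd _ _ _ HC HA S2) as K3.
  exists A. split; auto. split. { eapply chain_fwd; eauto. }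
  rewrite HT. unfold Tri.
  rewrite <- (rel_unique _ _ _ HR HA K1), <- (rel_unique _ _ _ HP HB K2). reflexivity.
Qed.

Lemma tri_facts P Q Rp A : InD P -> InD Q -> InD Rp -> OnS1 A ->
  dot (mv P Q Rp) A = yv P Q Rp ->
  let B := Bof Rp A in let C := Bof P B in
  OnS1 B /\ OnS1 C /\ A <> B /\ B <> C /\ C <> A /\
  on_segment P B C /\ on_segment Q C A /\ on_segment Rp A B.
Proof.
  intros HP HQ HR HA Hl B C.
  assert (HB : OnS1 B) by (apply Bof_S1; auto).
  assert (HC : OnS1 C) by (apply Bof_S1; auto).
  assert (K1 : chordrel A B Rp) by (apply Bof_rel; auto).
  assert (K2 : chordrel B C P) by (apply Bof_rel; auto).
  assert (K3 : chordrel C A Q) by (apply (chain_bwd P Q Rp A B C HP HR HA HB K1 K2 Hl)).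
  destruct (chord_bwd _ _ _ HA HB HR K1) as [N1 S1].
  destruct (chord_bwd _ _ _ HB HC HP K2) as [N2 S2].
  destruct (chord_bwd _ _ _ HC HA HQ K3) as [N3 S3].
  tauto.
Qed.

Lemma char_bwd P Q Rp A : InD P -> InD Q -> InD Rp -> OnS1 A ->
  dot (mv P Q Rp) A = yv P Q Rp -> circumscribing_inscribed P Q Rp (Tri P Rp A).
Proof.
  intros HP HQ HR HA Hl.
  destruct (tri_facts P Q Rp A HP HQ HR HA Hl) as (HB & HC & N1 & N2 & N3 & S1 & S2 & S3).
  exists A, (Bof Rp A), (Bof P (Bof Rp A)). repeat split; auto.
Qed.


Definition Dd (P Q Rp : pt) : R :=
  (fst Q - fst P) * (snd Rp - snd P) - (snd Q - snd P) * (fst Rp - fst P).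
Definition Dl (P Q Rp : pt) : R :=
  (1 - sqnorm P) * (1 - sqnorm Q) * (1 - sqnorm Rp).

Lemma key_id P Q Rp :
  fst (mv P Q Rp) ^ 2 + snd (mv P Q Rp) ^ 2 - yv P Q Rp ^ 2 = Dd P Q Rp ^ 2 - Dl P Q Rp.
Proof.
  destruct P, Q, Rp; unfold mv, yv, Dd, Dl, sqnorm, dot; simpl. ring.
Qed.

Lemma y_id P Q Rp : yv P Q Rp - dot (mv P Q Rp) Rp = (1 - sqnorm Rp) * (1 - dot Q P).
Proof.
  destruct P, Q, Rp; unfold mv, yv, sqnorm, dot; simpl. ring.
Qed.


Lemma seg_sym X U V : on_segment X U V -> on_segment X V U.
Proof.
  intros [t [Ht E]]. exists (1 - t). split; [lra|]. rewrite E.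
  destruct U, V; simpl. f_equal; ring.
Qed.

Lemma in_not_on X : InD X -> OnS1 X -> False.
Proof. unfold InD, OnS1; lra. Qed.

Lemma seg_pos X U V : InD X -> OnS1 U -> on_segment X U V ->
  exists s, 0 < s /\ X = (fst U + s * (fst V - fst U), snd U + s * (snd V - snd U)).
Proof.
  intros HX HU [t [Ht E]]. exists t. split; auto.
  destruct (Req_dec t 0); [|lra]. subst t. exfalso. apply (in_not_on X); auto.
  rewrite E. destruct U; simpl. unfold OnS1 in *; simpl in *.
  replace (r + 0 * (fst V - r)) with r by ring. replace (r0 + 0 * (snd V - r0)) with r0 by ring. auto.
Qed.

Lemma collinear3 U V W : OnS1 U -> OnS1 V -> OnS1 W -> U <> V ->
  (fst V - fst U) * (snd W - snd U) - (snd V - snd U) * (fst W - fst U) = 0 ->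
  W = U \/ W = V.
Proof.
  intros HU HV HW Hne Hc.
  destruct U as [u1 u2], V as [v1 v2], W as [w1 w2]; unfold OnS1 in *; simpl in *.
  assert (Hd : 0 < (v1-u1)^2 + (v2-u2)^2).
  { apply sum_sq_pos. destruct (Req_dec v1 u1); [destruct (Req_dec v2 u2)|].
    - subst. contradiction.
    - right; lra.
    - left; lra. }
  set (d := (v1-u1)^2 + (v2-u2)^2) in *.
  set (t := ((w1-u1)*(v1-u1) + (w2-u2)*(v2-u2)) / d).
  assert (K1 : (w1-u1)*d = ((w1-u1)*(v1-u1) + (w2-u2)*(v2-u2))*(v1-u1))
    by (unfold d; clear -Hc; simpl; nsatz).
  assert (K2 : (w2-u2)*d = ((w1-u1)*(v1-u1) + (w2-u2)*(v2-u2))*(v2-u2))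
    by (unfold d; clear -Hc; simpl; nsatz).
  assert (E1 : w1 = u1 + t*(v1-u1)).
  { unfold t. replace (((w1-u1)*(v1-u1) + (w2-u2)*(v2-u2))/d*(v1-u1))
      with (((w1-u1)*(v1-u1) + (w2-u2)*(v2-u2))*(v1-u1)/d) by (field; lra).
    rewrite <- K1. field. lra. }
  assert (E2 : w2 = u2 + t*(v2-u2)).
  { unfold t. replace (((w1-u1)*(v1-u1) + (w2-u2)*(v2-u2))/d*(v2-u2))
      with (((w1-u1)*(v1-u1) + (w2-u2)*(v2-u2))*(v2-u2)/d) by (field; lra).
    rewrite <- K2. field. lra. }
  clearbody t. subst w1 w2.
  assert (HN : t*(t-1)*d = 0) by (unfold d; clear -HU HV HW; simpl in *; nsatz).
  apply Rmult_integral in HN. destruct HN as [HN|HN]; [|lra].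
  apply Rmult_integral in HN. destruct HN as [HN|HN].
  - left. subst t. f_equal; ring.
  - right. assert (t = 1) by lra. subst t. f_equal; ring.
Qed.

Lemma NC X U V W : InD X -> OnS1 U -> OnS1 V -> OnS1 W -> U <> V -> U <> W -> V <> W ->
  on_segment X U V -> on_segment X U W -> False.
Proof.
  intros HX HU HV HW N1 N2 N3 S1 S2.
  destruct (seg_pos _ _ _ HX HU S1) as [s [Hs E1]].
  destruct (seg_pos _ _ _ HX HU S2) as [s' [Hs' E2]].
  rewrite E1 in E2. injection E2 as F1 F2.
  assert (Hc : s * ((fst V - fst U) * (snd W - snd U) - (snd V - snd U) * (fst W - fst U)) = 0).
  { clear -F1 F2. nsatz. }
  apply Rmult_integral in Hc. destruct Hc as [Hc|Hc]; [lra|].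
  destruct (collinear3 U V W HU HV HW N1 Hc) as [E|E]; subst; auto.
Qed.

Lemma seg_same X U : InD X -> OnS1 U -> on_segment X U U -> False.
Proof.
  intros HX HU [t [_ E]]. apply (in_not_on X); auto. rewrite E.
  destruct U; simpl. unfold OnS1 in *; simpl in *.
  replace (r + t * (r - r)) with r by ring. replace (r0 + t * (r0 - r0)) with r0 by ring. auto.
Qed.

Lemma pair_unique X A B C U V : InD X -> OnS1 A -> OnS1 B -> OnS1 C ->
  A <> B -> B <> C -> C <> A -> on_segment X A B ->
  (U = A \/ U = B \/ U = C) -> (V = A \/ V = B \/ V = C) -> on_segment X U V ->
  (U = A /\ V = B) \/ (U = B /\ V = A).
Proof.
  intros HX HA HB HC N1 N2 N3 S HU HV SU.
  assert (N1' : B <> A) by auto. assert (N2' : C <> B) by auto. assert (N3' : A <> C) by auto.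
  pose proof (seg_sym _ _ _ S) as S'. pose proof (seg_sym _ _ _ SU) as SU'.
  destruct HU as [ -> | [ -> | -> ] ]; destruct HV as [ -> | [ -> | -> ] ];
  first [ left; split; reflexivity | right; split; reflexivity | exfalso ];
  first [ solve [apply (seg_same X A); auto] | solve [apply (seg_same X B); auto]
        | solve [apply (seg_same X C); auto]
        | solve [apply (NC X A B C); auto]
        | solve [apply (NC X B A C); auto] ].
Qed.


Lemma Tri_inj P Q Rp A1 A2 : InD P -> InD Q -> InD Rp -> OnS1 A1 -> OnS1 A2 ->
  dot (mv P Q Rp) A1 = yv P Q Rp -> dot (mv P Q Rp) A2 = yv P Q Rp ->
  Tri P Rp A1 = Tri P Rp A2 -> A1 = A2.
Proof.
  intros HP HQ HR HA1 HA2 Hl1 Hl2 E.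
  destruct (tri_facts P Q Rp A1 HP HQ HR HA1 Hl1) as (HB1 & HC1 & N1 & N2 & N3 & S1 & S2 & S3).
  destruct (tri_facts P Q Rp A2 HP HQ HR HA2 Hl2) as (HB2 & HC2 & M1 & M2 & M3 & T1 & T2 & T3).
  set (B1 := Bof Rp A1) in *. set (C1 := Bof P B1) in *.
  set (B2 := Bof Rp A2) in *. set (C2 := Bof P B2) in *.
  assert (mem : forall U, Tri P Rp A2 U -> U = A1 \/ U = B1 \/ U = C1).
  { intros U HU. rewrite <- E in HU. exact HU. }
  assert (MA : A2 = A1 \/ A2 = B1 \/ A2 = C1) by (apply mem; left; reflexivity).
  assert (MB : B2 = A1 \/ B2 = B1 \/ B2 = C1) by (apply mem; right; left; reflexivity).
  assert (MC : C2 = A1 \/ C2 = B1 \/ C2 = C1) by (apply mem; right; right; reflexivity).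
  destruct (pair_unique Rp A1 B1 C1 A2 B2 HR HA1 HB1 HC1 N1 N2 N3 S3 MA MB T3) as [[-> _]|[X1 _]].
  - reflexivity.
  - assert (MA' : A2 = C1 \/ A2 = A1 \/ A2 = B1) by tauto.
    assert (MC' : C2 = C1 \/ C2 = A1 \/ C2 = B1) by tauto.
    destruct (pair_unique Q C1 A1 B1 C2 A2 HQ HC1 HA1 HB1 N3 N1 N2 S2 MC' MA' T2) as [[_ X2]|[_ X2]].
    + symmetry; auto.
    + exfalso. apply N2. rewrite <- X1, X2. reflexivity.
Qed.

Definition mm (m : pt) := fst m ^ 2 + snd m ^ 2.
Definition Ac (m : pt) (y c : R) : pt :=
  ((y * fst m - c * snd m) / mm m, (y * snd m + c * fst m) / mm m).

Lemma sol_bound m A y : OnS1 A -> dot m A = y -> y^2 <= mm m.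
Proof.
  destruct m as [m1 m2], A as [a1 a2]; unfold OnS1, dot, mm; simpl; intros HA Hy.
  subst y.
  assert (E : (m1*a1+m2*a2)^2 + (m1*a2 - m2*a1)^2 = (m1^2+m2^2)*(a1^2+a2^2)) by ring.
  simpl in HA. pose proof (pow2_ge_0 (m1*a2 - m2*a1)).
  replace (a1^2+a2^2) with 1 in E by (simpl; lra). lra.
Qed.

Lemma sol_form m A y : 0 < mm m -> OnS1 A -> dot m A = y ->
  let c := fst m * snd A - snd m * fst A in c^2 = mm m - y^2 /\ A = Ac m y c.
Proof.
  destruct m as [m1 m2], A as [a1 a2]; unfold Ac, OnS1, dot, mm; simpl; intros Hm HA Hy.
  subst y. split.
  - simpl in *. clear Hm. nsatz.
  - assert (Hm' : m1 * (m1 * 1) + m2 * (m2 * 1) <> 0) by lra.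
    assert (Hm'' : m1 * m1 + m2 * m2 <> 0) by lra.
    f_equal; field; auto.
Qed.

Lemma sol_Ac m y c : 0 < mm m -> c^2 = mm m - y^2 -> OnS1 (Ac m y c) /\ dot m (Ac m y c) = y.
Proof.
  destruct m as [m1 m2]; unfold Ac, OnS1, dot, mm; simpl; intros Hm Hc.
  assert (Hm' : m1 * (m1 * 1) + m2 * (m2 * 1) <> 0) by lra.
    assert (Hm'' : m1 * m1 + m2 * m2 <> 0) by lra.
  split.
  - apply div_circ; auto. clear -Hc. simpl in *. nsatz.
  - field; auto.
Qed.

Lemma Ac_inj m y c c' : 0 < mm m -> Ac m y c = Ac m y c' -> c = c'.
Proof.
  unfold Ac. destruct m as [m1 m2]; simpl; intros Hm E.
  assert (Hn : mm (m1,m2) <> 0) by lra.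
  injection E as E1 E2. unfold Rdiv in E1, E2.
  apply Rmult_eq_reg_r in E1; [|apply Rinv_neq_0_compat; auto].
  apply Rmult_eq_reg_r in E2; [|apply Rinv_neq_0_compat; auto].
  assert (F1 : (c - c') * m2 = 0) by lra.
  assert (F2 : (c - c') * m1 = 0) by lra.
  apply Rmult_integral in F1; apply Rmult_integral in F2.
  destruct F1; [lra|]. destruct F2; [lra|]. subst. unfold mm in Hm; simpl in Hm. lra.
Qed.

Lemma QP_lt1 P Q : InD P -> InD Q -> 0 < 1 - dot Q P.
Proof.
  destruct P as [p1 p2], Q as [q1 q2]; unfold InD, dot; simpl; intros.
  pose proof (pow2_ge_0 (q1-p1)). pose proof (pow2_ge_0 (q2-p2)). nra.
Qed.

Lemma mm_pos P Q Rp : InD P -> InD Q -> InD Rp ->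
  0 <= mm (mv P Q Rp) - yv P Q Rp ^ 2 -> 0 < mm (mv P Q Rp).
Proof.
  intros HP HQ HR Hd.
  pose proof (y_id P Q Rp) as Y. pose proof (QP_lt1 P Q HP HQ) as H1.
  assert (H2 : 0 < 1 - sqnorm Rp) by (unfold InD, sqnorm in *; lra).
  destruct (mv P Q Rp) as [m1 m2]. unfold mm, dot in *; simpl in *.
  destruct (Rle_lt_dec (m1 * (m1 * 1) + m2 * (m2 * 1)) 0) as [H|H]; auto.
  assert (m1 = 0) by nra. assert (m2 = 0) by nra. subst.
  assert (0 < yv P Q Rp) by nra. nra.
Qed.

Lemma count0 P Q Rp : InD P -> InD Q -> InD Rp ->
  mm (mv P Q Rp) - yv P Q Rp ^ 2 < 0 -> has_card (circumscribing_inscribed P Q Rp) 0.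
Proof.
  intros HP HQ HR Hd. exists nil. split; [reflexivity|]. split; [constructor|].
  intros T; split; [intros []|]. intros HT.
  destruct (char_fwd P Q Rp T HP HQ HR HT) as (A & HA & Hl & _).
  pose proof (sol_bound _ _ _ HA Hl). lra.
Qed.

Lemma sq0 x : x^2 = 0 -> x = 0.
Proof. intros H. simpl in H. rewrite Rmult_1_r in H. apply Rmult_integral in H. tauto. Qed.

Lemma count1 P Q Rp : InD P -> InD Q -> InD Rp ->
  mm (mv P Q Rp) - yv P Q Rp ^ 2 = 0 -> has_card (circumscribing_inscribed P Q Rp) 1.
Proof.
  intros HP HQ HR Hd.
  assert (Hm : 0 < mm (mv P Q Rp)) by (apply mm_pos; auto; lra).
  exists (Tri P Rp (Ac (mv P Q Rp) (yv P Q Rp) 0) :: nil).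
  split; [reflexivity|]. split; [constructor; [intros []|constructor]|].
  intros T; split.
  - intros [<- | []].
    destruct (sol_Ac (mv P Q Rp) (yv P Q Rp) 0 Hm) as [H1 H2]; [lra|].
    apply char_bwd; auto.
  - intros HT. left.
    destruct (char_fwd P Q Rp T HP HQ HR HT) as (A & HA & Hl & ->).
    destruct (sol_form _ _ _ Hm HA Hl) as [Hc EA].
    assert (Hc0 : fst (mv P Q Rp) * snd A - snd (mv P Q Rp) * fst A = 0).
    { apply sq0. rewrite Hc. exact Hd. }
    rewrite Hc0 in EA. rewrite <- EA. reflexivity.
Qed.

Lemma count2 P Q Rp : InD P -> InD Q -> InD Rp ->
  0 < mm (mv P Q Rp) - yv P Q Rp ^ 2 -> has_card (circumscribing_inscribed P Q Rp) 2.
Proof.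
  intros HP HQ HR Hd.
  assert (Hm : 0 < mm (mv P Q Rp)) by (apply mm_pos; auto; lra).
  set (s := sqrt (mm (mv P Q Rp) - yv P Q Rp ^ 2)).
  assert (Hs : 0 < s) by (apply sqrt_lt_R0; auto).
  assert (Hs2 : s ^ 2 = mm (mv P Q Rp) - yv P Q Rp ^ 2).
  { unfold s. rewrite <- Rsqr_pow2. apply Rsqr_sqrt. lra. }
  assert (Hs2' : (-s) ^ 2 = mm (mv P Q Rp) - yv P Q Rp ^ 2) by (rewrite <- Hs2; ring).
  destruct (sol_Ac _ _ _ Hm Hs2) as [H1 H2].
  destruct (sol_Ac _ _ _ Hm Hs2') as [H3 H4].
  exists (Tri P Rp (Ac (mv P Q Rp) (yv P Q Rp) s) :: Tri P Rp (Ac (mv P Q Rp) (yv P Q Rp) (-s)) :: nil).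
  split; [reflexivity|]. split.
  - constructor; [|constructor; [intros []|constructor]].
    intros [E | []].
    apply (Tri_inj P Q Rp) in E; auto.
    apply Ac_inj in E; auto. lra.
  - intros T; split.
    + intros [<- | [<- | []]]; apply char_bwd; auto.
    + intros HT.
      destruct (char_fwd P Q Rp T HP HQ HR HT) as (A & HA & Hl & ->).
      destruct (sol_form _ _ _ Hm HA Hl) as [Hc EA].
      set (c := fst (mv P Q Rp) * snd A - snd (mv P Q Rp) * fst A) in *.
      assert (Hcs : (c - s) * (c + s) = 0).
      { replace ((c - s) * (c + s)) with (c^2 - s^2) by ring. rewrite Hc, Hs2. ring. }
      apply Rmult_integral in Hcs. destruct Hcs as [Hcs|Hcs].
      * left. replace c with s in EA by lra. rewrite <- EA. reflexivity.
      * right; left. replace c with (-s) in EA by lra. rewrite <- EA. reflexivity.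
Qed.


Definition sP (X : pt) : R := sqrt (1 - fst X ^ 2 - snd X ^ 2).
Definition Kf (X Y : pt) : R := (1 - dot X Y) / (sP X * sP Y).

Lemma sP_pos X : InD X -> 0 < sP X.
Proof. unfold InD, sP; intros. apply sqrt_lt_R0. lra. Qed.

Lemma sP_sq X : InD X -> sP X ^ 2 = 1 - sqnorm X.
Proof.
  unfold InD, sP, sqnorm; intros. rewrite <- Rsqr_pow2, Rsqr_sqrt; lra.
Qed.

Lemma gaux1 p1 p2 s : 0 < s -> s^2 = 1 - p1^2 - p2^2 ->
  1 - ((p1/(1+s))^2 + (p2/(1+s))^2) = 2*s/(1+s).
Proof.
  intros Hs E. assert (1 + s <> 0) by lra.
  field_simplify; auto. 
  replace (p1^2) with (1 - s^2 - p2^2) by lra. field. all: repeat split; intro; nra.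
Qed.

Lemma gaux2 p1 p2 q1 q2 s t : 0 < s -> 0 < t -> s^2 = 1 - p1^2 - p2^2 -> t^2 = 1 - q1^2 - q2^2 ->
  (p1/(1+s) - q1/(1+t))^2 + (p2/(1+s) - q2/(1+t))^2 = 2*(1 - s*t - (p1*q1 + p2*q2))/((1+s)*(1+t)).
Proof.
  intros Hs Ht E1 E2. assert (1 + s <> 0) by lra. assert (1 + t <> 0) by lra.
  field_simplify_eq; auto.
  replace (p1^2) with (1 - s^2 - p2^2) by lra.
  replace (q1^2) with (1 - t^2 - q2^2) by lra. ring.
Qed.

Lemma d'_eq X Y : InD X -> InD Y -> d' X Y = arccosh (Kf X Y).
Proof.
  intros HX HY. pose proof (sP_pos X HX) as Hs. pose proof (sP_pos Y HY) as Ht.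
  pose proof (sP_sq X HX) as Es. pose proof (sP_sq Y HY) as Et.
  unfold d', dP, Ginv, Kf, sqdist, sqnorm, dot in *. f_equal.
  fold (sP X). fold (sP Y).
  destruct X as [p1 p2], Y as [q1 q2]; cbn [fst snd] in *.
  set (s := sP (p1,p2)) in *. set (t := sP (q1,q2)) in *.
  rewrite (gaux1 p1 p2 s), (gaux1 q1 q2 t), (gaux2 p1 p2 q1 q2 s t); try lra.
  field. lra.
Qed.

Definition Ff (p1 p2 q1 q2 r1 r2 t : R) : R :=
  let s1 := p1 + t*(q1-p1) in let s2 := p2 + t*(q2-p2) in
  let L2 := (q1-p1)^2 + (q2-p2)^2 - (p1*q2 - p2*q1)^2 in
  let D := (q1-p1)*(r2-p2) - (q2-p2)*(r1-p1) in
  (1 - (r1*s1 + r2*s2))^2 * L2 - (1 - (s1^2 + s2^2)) * ((1 - (r1^2+r2^2))*L2 + D^2).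
Definition F2f (p1 p2 q1 q2 r1 r2 : R) : R :=
  let L2 := (q1-p1)^2 + (q2-p2)^2 - (p1*q2 - p2*q1)^2 in
  let D := (q1-p1)*(r2-p2) - (q2-p2)*(r1-p1) in
  L2 * (r1*(q1-p1) + r2*(q2-p2))^2 + ((q1-p1)^2 + (q2-p2)^2) * ((1 - (r1^2+r2^2))*L2 + D^2).
Lemma Fsq p1 p2 q1 q2 r1 r2 t :
  let F2 := F2f p1 p2 q1 q2 r1 r2 in
  let F0 := Ff p1 p2 q1 q2 r1 r2 0 in
  let F1 := Ff p1 p2 q1 q2 r1 r2 1 - F2 - F0 in
  4 * F2 * Ff p1 p2 q1 q2 r1 r2 t = (2 * F2 * t + F1)^2.
Proof. intros. unfold F1, F0, F2, Ff, F2f. ring. Qed.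

Lemma ln_le' x y : 0 < x -> x <= y -> ln x <= ln y.
Proof. intros H1 [H2|H2]. - left; apply ln_increasing; auto. - subst; lra. Qed.

Lemma arccosh_mono x y : 1 <= x -> x <= y -> arccosh x <= arccosh y.
Proof.
  intros H1 H2. unfold arccosh. apply ln_le'.
  - pose proof (sqrt_pos (x^2-1)). lra.
  - apply Rplus_le_compat; auto. apply sqrt_le_1_alt. nra.
Qed.

Lemma exp_arccosh x : 1 <= x -> exp (arccosh x) = x + sqrt (x^2-1).
Proof.
  intros H. unfold arccosh. apply exp_ln. pose proof (sqrt_pos (x^2-1)). lra.
Qed.

Lemma dotlt1 X Y : InD X -> InD Y -> 0 < 1 - dot X Y.
Proof.
  destruct X as [p1 p2], Y as [q1 q2]; unfold InD, dot; cbn [fst snd]; intros.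
  pose proof (pow2_ge_0 (q1-p1)). pose proof (pow2_ge_0 (q2-p2)). nra.
Qed.

Lemma Kf_pos X Y : InD X -> InD Y -> 0 < Kf X Y.
Proof.
  intros. unfold Kf. apply Rdiv_lt_0_compat. apply dotlt1; auto.
  apply Rmult_lt_0_compat; apply sP_pos; auto.
Qed.

Lemma Kf_sq X Y : InD X -> InD Y -> Kf X Y ^ 2 = (1 - dot X Y)^2 / ((1 - sqnorm X) * (1 - sqnorm Y)).
Proof.
  intros HX HY. pose proof (sP_pos X HX). pose proof (sP_pos Y HY).
  rewrite <- (sP_sq X HX), <- (sP_sq Y HY). unfold Kf. field. lra.
Qed.

Definition L2 (X Y : pt) : R :=
  (fst Y - fst X)^2 + (snd Y - snd X)^2 - (fst X * snd Y - snd X * fst Y)^2.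

Lemma L2_id X Y : (1 - dot X Y)^2 - (1 - sqnorm X) * (1 - sqnorm Y) = L2 X Y.
Proof. destruct X, Y; unfold dot, sqnorm, L2; cbn [fst snd]; ring. Qed.

Lemma L2_pos X Y : InD X -> InD Y -> X <> Y -> 0 < L2 X Y.
Proof.
  intros HX HY Hne. destruct X as [p1 p2], Y as [q1 q2]; unfold InD, L2 in *; cbn [fst snd] in *.
  assert (Hd : 0 < (q1-p1)^2 + (q2-p2)^2).
  { apply sum_sq_pos. destruct (Req_dec q1 p1); [destruct (Req_dec q2 p2)|].
    - subst. contradiction.
    - right; lra.
    - left; lra. }
  assert (E : (p1*q2 - p2*q1)^2 + ((p1-q1)*q1 + (p2-q2)*q2)^2 = ((q1-p1)^2 + (q2-p2)^2) * (q1^2+q2^2)) by ring.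
  pose proof (pow2_ge_0 ((p1-q1)*q1 + (p2-q2)*q2)).
  assert (((q1-p1)^2 + (q2-p2)^2) * (q1^2+q2^2) < (q1-p1)^2 + (q2-p2)^2).
  { pose proof (Rmult_lt_compat_l _ _ _ Hd HY). lra. }
  lra.
Qed.

Lemma Rdiv_le0 a b : 0 <= a -> 0 < b -> 0 <= a / b.
Proof. intros. unfold Rdiv. apply Rmult_le_pos; auto. left; apply Rinv_0_lt_compat; auto. Qed.

Definition lpt (X Y : pt) (t : R) : pt := (fst X + t*(fst Y - fst X), snd X + t*(snd Y - snd X)).
Definition FF X Y Z t := Ff (fst X) (snd X) (fst Y) (snd Y) (fst Z) (snd Z) t.
Definition FF2 X Y Z := F2f (fst X) (snd X) (fst Y) (snd Y) (fst Z) (snd Z).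
Definition c0 X Y Z := 1 + Dd X Y Z ^ 2 / ((1 - sqnorm Z) * L2 X Y).

Lemma FF_expand X Y Z t : FF X Y Z t =
  (1 - dot Z (lpt X Y t))^2 * L2 X Y - (1 - sqnorm (lpt X Y t)) * ((1 - sqnorm Z) * L2 X Y + Dd X Y Z ^2).
Proof. destruct X, Y, Z; unfold FF, Ff, L2, Dd, lpt, dot, sqnorm; cbn [fst snd]. ring. Qed.

Lemma FF2_expand X Y Z : FF2 X Y Z =
  L2 X Y * (fst Z * (fst Y - fst X) + snd Z * (snd Y - snd X))^2 +
  ((fst Y - fst X)^2 + (snd Y - snd X)^2) * ((1 - sqnorm Z) * L2 X Y + Dd X Y Z ^2).
Proof. destruct X, Y, Z; unfold FF2, F2f, L2, Dd, sqnorm; cbn [fst snd]. ring. Qed.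

Lemma abs_div d a b L D : a <> 0 -> b <> 0 -> L <> 0 ->
  (1 - d)^2 / (a * b) - (1 + D^2 / (a * L)) = ((1-d)^2 * L - b * (a * L + D^2)) / (a * b * L).
Proof. intros. field. auto. Qed.

Lemma Kf_line X Y Z t : InD Z -> InD (lpt X Y t) -> 0 < L2 X Y ->
  Kf Z (lpt X Y t) ^ 2 - c0 X Y Z = FF X Y Z t / ((1 - sqnorm Z) * (1 - sqnorm (lpt X Y t)) * L2 X Y).
Proof.
  intros HZ HS HL. rewrite Kf_sq, FF_expand by auto. unfold c0.
  apply abs_div; unfold InD, sqnorm in *; lra.
Qed.

Lemma XneY X Y Z : Dd X Y Z <> 0 -> X <> Y.
Proof. intros H E. subst. apply H. unfold Dd. ring. Qed.

Lemma FF2_pos X Y Z : InD X -> InD Y -> InD Z -> Dd X Y Z <> 0 -> 0 < FF2 X Y Z.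
Proof.
  intros HX HY HZ HD. rewrite FF2_expand.
  pose proof (L2_pos X Y HX HY (XneY X Y Z HD)) as HL.
  assert (Hd : 0 < (fst Y - fst X)^2 + (snd Y - snd X)^2).
  { apply sum_sq_pos. destruct X as [p1 p2], Y as [q1 q2]; cbn [fst snd].
    destruct (Req_dec q1 p1); [destruct (Req_dec q2 p2)|].
    - subst. exfalso. apply HD. unfold Dd. ring.
    - right; lra.
    - left; lra. }
  assert (Ha : 0 < 1 - sqnorm Z) by (unfold InD, sqnorm in *; lra).
  pose proof (pow2_ge_0 (fst Z * (fst Y - fst X) + snd Z * (snd Y - snd X))).
  pose proof (pow2_ge_0 (Dd X Y Z)).
  assert (0 < (1 - sqnorm Z) * L2 X Y) by (apply Rmult_lt_0_compat; auto).
  assert (0 < ((fst Y - fst X)^2 + (snd Y - snd X)^2) * ((1 - sqnorm Z) * L2 X Y + Dd X Y Z ^2))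
    by (apply Rmult_lt_0_compat; lra).
  assert (0 <= L2 X Y * (fst Z * (fst Y - fst X) + snd Z * (snd Y - snd X))^2)
    by (apply Rmult_le_pos; lra).
  lra.
Qed.

Lemma FF_sq X Y Z t :
  4 * FF2 X Y Z * FF X Y Z t = (2 * FF2 X Y Z * t + (FF X Y Z 1 - FF2 X Y Z - FF X Y Z 0))^2.
Proof. unfold FF, FF2. apply Fsq. Qed.

Lemma FF_nonneg X Y Z t : InD X -> InD Y -> InD Z -> Dd X Y Z <> 0 -> 0 <= FF X Y Z t.
Proof.
  intros. pose proof (FF2_pos X Y Z H H0 H1 H2). pose proof (FF_sq X Y Z t).
  pose proof (pow2_ge_0 (2 * FF2 X Y Z * t + (FF X Y Z 1 - FF2 X Y Z - FF X Y Z 0))).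
  nra.
Qed.

Lemma c0_ge1 X Y Z : InD X -> InD Y -> InD Z -> Dd X Y Z <> 0 -> 1 <= c0 X Y Z.
Proof.
  intros. unfold c0. pose proof (L2_pos X Y H H0 (XneY X Y Z H2)).
  assert (0 < 1 - sqnorm Z) by (unfold InD, sqnorm in *; lra).
  assert (0 <= Dd X Y Z ^ 2 / ((1 - sqnorm Z) * L2 X Y)).
  { apply Rdiv_le0. apply pow2_ge_0. apply Rmult_lt_0_compat; auto. }
  lra.
Qed.

Lemma min_ge X Y Z t : InD X -> InD Y -> InD Z -> Dd X Y Z <> 0 -> InD (lpt X Y t) ->
  sqrt (c0 X Y Z) <= Kf Z (lpt X Y t).
Proof.
  intros HX HY HZ HD HS.
  pose proof (L2_pos X Y HX HY (XneY X Y Z HD)) as HL.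
  pose proof (Kf_line X Y Z t HZ HS HL) as E.
  pose proof (FF_nonneg X Y Z t HX HY HZ HD).
  assert (0 <= FF X Y Z t / ((1 - sqnorm Z) * (1 - sqnorm (lpt X Y t)) * L2 X Y)).
  { apply Rdiv_le0; auto. unfold InD, sqnorm in *.
    apply Rmult_lt_0_compat; auto. apply Rmult_lt_0_compat; lra. }
  pose proof (Kf_pos Z _ HZ HS).
  rewrite <- (sqrt_pow2 (Kf Z (lpt X Y t))) by lra.
  apply sqrt_le_1_alt. lra.
Qed.

Definition t0 X Y Z := - (FF X Y Z 1 - FF2 X Y Z - FF X Y Z 0) / (2 * FF2 X Y Z).

Lemma cauchy2 Z S : dot Z S ^ 2 <= sqnorm Z * sqnorm S.
Proof.
  destruct Z as [z1 z2], S as [s1 s2]; unfold dot, sqnorm; cbn [fst snd].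
  pose proof (pow2_ge_0 (z1*s2 - z2*s1)).
  assert ((z1*s1+z2*s2)^2 + (z1*s2 - z2*s1)^2 = (z1^2+z2^2)*(s1^2+s2^2)) by ring. lra.
Qed.

Lemma min_at X Y Z : InD X -> InD Y -> InD Z -> Dd X Y Z <> 0 ->
  InD (lpt X Y (t0 X Y Z)) /\ Kf Z (lpt X Y (t0 X Y Z)) = sqrt (c0 X Y Z).
Proof.
  intros HX HY HZ HD.
  pose proof (L2_pos X Y HX HY (XneY X Y Z HD)) as HL.
  pose proof (FF2_pos X Y Z HX HY HZ HD) as HF2.
  assert (HF : FF X Y Z (t0 X Y Z) = 0).
  { pose proof (FF_sq X Y Z (t0 X Y Z)) as E.
    replace (2 * FF2 X Y Z * t0 X Y Z + (FF X Y Z 1 - FF2 X Y Z - FF X Y Z 0)) with 0 in E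
      by (unfold t0; field; lra).
    nra. }
  set (S0 := lpt X Y (t0 X Y Z)) in *.
  assert (Ha : 0 < 1 - sqnorm Z) by (unfold InD, sqnorm in *; lra).
  assert (HaL : 0 < (1 - sqnorm Z) * L2 X Y + Dd X Y Z ^2).
  { pose proof (pow2_ge_0 (Dd X Y Z)). pose proof (Rmult_lt_0_compat _ _ Ha HL). lra. }
  rewrite FF_expand in HF. fold S0 in HF.
  assert (HS : InD S0).
  { unfold InD. fold (sqnorm S0). 
    destruct (Rlt_le_dec 0 (1 - sqnorm S0)) as [H|H]; [lra|]. exfalso.
    pose proof (pow2_ge_0 (1 - dot Z S0)) as H0.
    assert (H1 : 0 <= (1 - dot Z S0)^2 * L2 X Y) by (apply Rmult_le_pos; lra).
    assert (H2 : (1 - sqnorm S0) * ((1 - sqnorm Z) * L2 X Y + Dd X Y Z ^2) <= 0).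
    { pose proof (Rmult_le_compat_r _ _ _ (Rlt_le _ _ HaL) H). lra. }
    assert (H3 : (1 - dot Z S0)^2 * L2 X Y = 0) by lra.
    apply Rmult_integral in H3. destruct H3 as [H3|H3]; [|lra].
    assert (H4 : (1 - sqnorm S0) * ((1 - sqnorm Z) * L2 X Y + Dd X Y Z ^2) = 0) by lra.
    apply Rmult_integral in H4. destruct H4 as [H4|H4]; [|lra].
    assert (H5 : dot Z S0 = 1).
    { simpl in H3. rewrite Rmult_1_r in H3. apply Rmult_integral in H3. lra. }
    pose proof (cauchy2 Z S0). rewrite H5 in H6.
    assert (sqnorm S0 = 1) by lra. rewrite H7 in H6. unfold InD, sqnorm in *. lra. }
  split; auto.
  pose proof (Kf_line X Y Z (t0 X Y Z) HZ HS HL) as E. fold S0 in E.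
  rewrite FF_expand in E. fold S0 in E. rewrite HF in E.
  unfold Rdiv in E. rewrite Rmult_0_l in E.
  pose proof (Kf_pos Z S0 HZ HS).
  rewrite <- (sqrt_pow2 (Kf Z S0)) by lra. f_equal. lra.
Qed.

Lemma is_delta_val X Y Z : InD X -> InD Y -> InD Z -> Dd X Y Z <> 0 ->
  is_delta X Y Z (arccosh (sqrt (c0 X Y Z))).
Proof.
  intros HX HY HZ HD.
  destruct (min_at X Y Z HX HY HZ HD) as [HS HK].
  pose proof (c0_ge1 X Y Z HX HY HZ HD) as Hc.
  assert (Hs1 : 1 <= sqrt (c0 X Y Z)).
  { rewrite <- sqrt_1. apply sqrt_le_1_alt. auto. }
  split.
  - exists (lpt X Y (t0 X Y Z)). split; auto. split.
    + exists (t0 X Y Z). reflexivity.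
    + rewrite d'_eq by auto. rewrite HK. reflexivity.
  - intros S HS' [t Ht]. subst S. rewrite d'_eq by auto.
    apply arccosh_mono; auto. apply min_ge; auto.
Qed.

Lemma delta_val X Y Z : InD X -> InD Y -> InD Z -> Dd X Y Z <> 0 ->
  delta X Y Z = arccosh (sqrt (c0 X Y Z)).
Proof.
  intros HX HY HZ HD.
  pose proof (is_delta_val X Y Z HX HY HZ HD) as H.
  assert (He : is_delta X Y Z (delta X Y Z)).
  { unfold delta. apply epsilon_spec. exists (arccosh (sqrt (c0 X Y Z))). exact H. }
  destruct H as [[S1 [H1 [H1' H1'']]] H2]. destruct He as [[S2 [H3 [H3' H3'']]] H4].
  apply Rle_antisym.
  - rewrite <- H1''. apply H4; auto.
  - rewrite <- H3''. apply H2; auto.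
Qed.

Definition ash (a : R) : R := ln (a + sqrt (a^2 + 1)).

Lemma ash_lt a b : 0 <= a -> a < b -> ash a < ash b.
Proof.
  intros Ha Hab. unfold ash. apply ln_increasing.
  - pose proof (sqrt_pos (a^2+1)). assert (0 < sqrt (a^2+1)) by (apply sqrt_lt_R0; nra). lra.
  - apply Rplus_lt_le_compat; auto. apply sqrt_le_1_alt. nra.
Qed.

Lemma sqrt_sq' x : 0 <= x -> sqrt x ^ 2 = x.
Proof. intros. rewrite <- Rsqr_pow2. apply Rsqr_sqrt. auto. Qed.

Lemma delta_ash X Y Z : InD X -> InD Y -> InD Z -> Dd X Y Z <> 0 ->
  delta X Y Z = ash (sqrt (c0 X Y Z - 1)).
Proof.
  intros. rewrite delta_val by auto. pose proof (c0_ge1 X Y Z H H0 H1 H2).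
  unfold arccosh, ash. rewrite sqrt_sq' by lra. rewrite sqrt_sq' by lra.
  f_equal. replace (c0 X Y Z - 1 + 1) with (c0 X Y Z) by ring. ring.
Qed.

Lemma Kf_sq1 X Y : InD X -> InD Y -> Kf X Y ^ 2 - 1 = L2 X Y / ((1 - sqnorm X) * (1 - sqnorm Y)).
Proof.
  intros. rewrite Kf_sq by auto. rewrite <- L2_id.
  assert (0 < 1 - sqnorm X) by (unfold InD, sqnorm in *; lra).
  assert (0 < 1 - sqnorm Y) by (unfold InD, sqnorm in *; lra).
  field. split; lra.
Qed.

Lemma cross_div a b c d : b <> 0 -> d <> 0 -> a * d = c * b -> a / b = c / d.
Proof. intros. field_simplify_eq; auto. lra. Qed.

Lemma Delta'_ash X Y : InD X -> InD Y -> X <> Y ->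
  Delta' X Y = ash (1 / sqrt (Kf X Y ^ 2 - 1)).
Proof.
  intros HX HY Hne. unfold Delta'. rewrite d'_eq by auto.
  pose proof (L2_pos X Y HX HY Hne) as HL.
  pose proof (Kf_sq1 X Y HX HY) as E1.
  assert (0 < 1 - sqnorm X) by (unfold InD, sqnorm in *; lra).
  assert (0 < 1 - sqnorm Y) by (unfold InD, sqnorm in *; lra).
  assert (Hr2 : 0 < Kf X Y ^ 2 - 1).
  { rewrite E1. apply Rdiv_lt_0_compat; auto. apply Rmult_lt_0_compat; auto. }
  pose proof (Kf_pos X Y HX HY) as HK.
  set (K := Kf X Y) in *. set (r := sqrt (K^2 - 1)).
  assert (Hr : 0 < r) by (apply sqrt_lt_R0; auto).
  assert (Er : r^2 = K^2 - 1) by (apply sqrt_sq'; lra).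
  assert (HK1 : 1 < K) by nra.
  rewrite exp_arccosh by lra. fold r. unfold ash. f_equal.
  assert (Es : sqrt ((1/r)^2 + 1) = K / r).
  { rewrite <- (sqrt_pow2 (K / r)). f_equal. field_simplify; try lra. rewrite Er. field. lra.
    apply Rdiv_le0; lra. }
  rewrite Es. replace (1 / r + K / r) with ((1 + K) / r) by (field; lra).
  apply cross_div; try lra.
Qed.

Lemma sq_lt_nn a b : 0 <= a -> 0 <= b -> a^2 < b^2 -> a < b.
Proof. intros. destruct (Rlt_le_dec a b); auto. nra. Qed.

Lemma sq_eq_nn a b : 0 <= a -> 0 <= b -> a^2 = b^2 -> a = b.
Proof. intros. rewrite <- (sqrt_pow2 a), <- (sqrt_pow2 b); auto. rewrite H1. auto. Qed.

Lemma cmp_triple X Y Z : InD X -> InD Y -> InD Z -> Dd X Y Z <> 0 ->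
  (Dd X Y Z ^ 2 < Dl X Y Z -> delta X Y Z < Delta' X Y) /\
  (Dd X Y Z ^ 2 = Dl X Y Z -> delta X Y Z = Delta' X Y) /\
  (Dl X Y Z < Dd X Y Z ^ 2 -> Delta' X Y < delta X Y Z).
Proof.
  intros HX HY HZ HD.
  pose proof (XneY X Y Z HD) as Hne.
  rewrite delta_ash, Delta'_ash by auto.
  pose proof (L2_pos X Y HX HY Hne) as HL.
  pose proof (Kf_sq1 X Y HX HY) as E1.
  assert (Ha : 0 < 1 - sqnorm X) by (unfold InD, sqnorm in *; lra).
  assert (Hb : 0 < 1 - sqnorm Y) by (unfold InD, sqnorm in *; lra).
  assert (Hc : 0 < 1 - sqnorm Z) by (unfold InD, sqnorm in *; lra).
  assert (Hr2 : 0 < Kf X Y ^ 2 - 1).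
  { rewrite E1. apply Rdiv_lt_0_compat; auto. apply Rmult_lt_0_compat; auto. }
  pose proof (c0_ge1 X Y Z HX HY HZ HD) as Hc0.
  assert (HDl : 0 < Dl X Y Z).
  { unfold Dl. apply Rmult_lt_0_compat; [apply Rmult_lt_0_compat|]; auto. }
  set (al := sqrt (c0 X Y Z - 1)).
  set (be := 1 / sqrt (Kf X Y ^ 2 - 1)).
  assert (Hal : 0 <= al) by apply sqrt_pos.
  assert (Hsr : 0 < sqrt (Kf X Y ^ 2 - 1)) by (apply sqrt_lt_R0; auto).
  assert (Hbe : 0 < be) by (unfold be; apply Rdiv_lt_0_compat; lra).
  assert (Eal : al^2 = c0 X Y Z - 1) by (apply sqrt_sq'; lra).
  assert (Ebe : be^2 = 1 / (Kf X Y ^ 2 - 1)).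
  { unfold be. replace ((1 / sqrt (Kf X Y ^ 2 - 1)) ^ 2) with (1 / (sqrt (Kf X Y ^ 2 - 1))^2)
      by (field; lra). rewrite sqrt_sq'; lra. }
  assert (Ediff : al^2 - be^2 = (Dd X Y Z ^ 2 - Dl X Y Z) / (Dl X Y Z * (Kf X Y ^ 2 - 1))).
  { rewrite Eal, Ebe. unfold c0. rewrite E1. unfold Dl. field.
    repeat split; lra. }
  assert (Hden : 0 < Dl X Y Z * (Kf X Y ^ 2 - 1)) by (apply Rmult_lt_0_compat; auto).
  split; [|split]; intros H.
  - apply ash_lt; auto. apply sq_lt_nn; try lra.
    assert ((Dd X Y Z ^ 2 - Dl X Y Z) / (Dl X Y Z * (Kf X Y ^ 2 - 1)) < 0).
    { unfold Rdiv. assert (0 < / (Dl X Y Z * (Kf X Y ^ 2 - 1))) by (apply Rinv_0_lt_compat; auto). nra. }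
    lra.
  - f_equal. apply sq_eq_nn; try lra. rewrite H in Ediff.
    unfold Rdiv in Ediff. rewrite Rminus_diag, Rmult_0_l in Ediff. lra.
  - apply ash_lt; try lra. apply sq_lt_nn; try lra.
    assert (0 < (Dd X Y Z ^ 2 - Dl X Y Z) / (Dl X Y Z * (Kf X Y ^ 2 - 1))).
    { apply Rdiv_lt_0_compat; lra. }
    lra.
Qed.


Lemma ash0 : ash 0 = 0.
Proof. unfold ash. replace (0^2+1) with 1 by ring. rewrite sqrt_1. replace (0+1) with 1 by ring. apply ln_1. Qed.

Lemma Delta'_pos X Y : InD X -> InD Y -> X <> Y -> 0 < Delta' X Y.
Proof.
  intros. rewrite Delta'_ash by auto. rewrite <- ash0. apply ash_lt; [lra|].
  assert (0 < Kf X Y ^ 2 - 1).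
  { rewrite Kf_sq1 by auto. apply Rdiv_lt_0_compat. apply L2_pos; auto.
    unfold InD, sqnorm in *. apply Rmult_lt_0_compat; lra. }
  apply Rdiv_lt_0_compat; [lra|]. apply sqrt_lt_R0; auto.
Qed.

Lemma omega_cases P Q Rp : InD P -> InD Q -> InD Rp -> Dd P Q Rp <> 0 ->
  (Dd P Q Rp ^ 2 < Dl P Q Rp -> omega P Q Rp < 1) /\
  (Dd P Q Rp ^ 2 = Dl P Q Rp -> omega P Q Rp = 1) /\
  (Dl P Q Rp < Dd P Q Rp ^ 2 -> 1 < omega P Q Rp).
Proof.
  intros HP HQ HR HD.
  assert (E1 : Dd Rp P Q = Dd P Q Rp) by (unfold Dd; ring).
  assert (E2 : Dd Q Rp P = Dd P Q Rp) by (unfold Dd; ring).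
  assert (F1 : Dl Rp P Q = Dl P Q Rp) by (unfold Dl; ring).
  assert (F2 : Dl Q Rp P = Dl P Q Rp) by (unfold Dl; ring).
  destruct (cmp_triple P Q Rp HP HQ HR HD) as (A1 & A2 & A3).
  destruct (cmp_triple Rp P Q HR HP HQ) as (B1 & B2 & B3); [rewrite E1; auto|].
  destruct (cmp_triple Q Rp P HQ HR HP) as (C1 & C2 & C3); [rewrite E2; auto|].
  rewrite E1, F1 in B1, B2, B3. rewrite E2, F2 in C1, C2, C3.
  pose proof (Delta'_pos P Q HP HQ (XneY _ _ _ HD)).
  pose proof (Delta'_pos Rp P HR HP (XneY Rp P Q ltac:(rewrite E1; auto))).
  pose proof (Delta'_pos Q Rp HQ HR (XneY Q Rp P ltac:(rewrite E2; auto))).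
  unfold omega.
  set (den := Delta' P Q + Delta' Rp P + Delta' Q Rp).
  assert (Hden : 0 < den) by (unfold den; lra).
  split; [|split]; intros G.
  - apply (Rmult_lt_reg_r den); auto. unfold Rdiv. rewrite Rmult_assoc, Rinv_l by lra.
    specialize (A1 G); specialize (B1 G); specialize (C1 G). unfold den. lra.
  - specialize (A2 G); specialize (B2 G); specialize (C2 G).
    rewrite A2, B2, C2. fold den. field. lra.
  - apply (Rmult_lt_reg_r den); auto. unfold Rdiv. rewrite Rmult_assoc, Rinv_l by lra.
    specialize (A3 G); specialize (B3 G); specialize (C3 G). unfold den. lra.
Qed.

Theorem proposition3p2 (P Q Rp : pt) :
  InD P -> InD Q -> InD Rp -> ~ collinear P Q Rp ->
  has_card (circumscribing_inscribed P Q Rp)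
    (if Rlt_dec (omega P Q Rp) 1 then 0%nat
     else if Req_EM_T (omega P Q Rp) 1 then 1%nat else 2%nat).
Proof.
  intros HP HQ HR HC.
  assert (HD : Dd P Q Rp <> 0) by exact HC.
  destruct (omega_cases P Q Rp HP HQ HR HD) as (O1 & O2 & O3).
  pose proof (key_id P Q Rp) as K. fold (mm (mv P Q Rp)) in K.
  destruct (Rlt_dec (omega P Q Rp) 1) as [H1|H1].
  - apply count0; auto. rewrite K.
    destruct (Rtotal_order (Dd P Q Rp ^ 2) (Dl P Q Rp)) as [G|[G|G]].
    + lra.
    + specialize (O2 G). lra.
    + specialize (O3 G). lra.
  - destruct (Req_EM_T (omega P Q Rp) 1) as [H2|H2].
    + apply count1; auto. rewrite K.
      destruct (Rtotal_order (Dd P Q Rp ^ 2) (Dl P Q Rp)) as [G|[G|G]].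
      * specialize (O1 G). lra.
      * lra.
      * specialize (O3 G). lra.
    + apply count2; auto. rewrite K.
      destruct (Rtotal_order (Dd P Q Rp ^ 2) (Dl P Q Rp)) as [G|[G|G]].
      * specialize (O1 G). lra.
      * specialize (O2 G). lra.
      * lra.
Qed.
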